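(* Let $T,S\in\mathcal{B}_A(\mathcal{H})$. Then $$\omega_A(TS)\le \tfrac12\Big(\omega_A(ST)+\|T\|_A\|S\|_A\Big).$$
   Context: $\mathcal{H}$ is a complex Hilbert space with inner product $\langle\cdot,\cdot\rangle$, and $A$ is a fixed nonzero positive bounded operator on $\mathcal{H}$. Set $\langle x,y\rangle_A=\langle Ax,y\rangle$ and $\|x\|_A=\|A^{1/2}x\|$. $\mathcal{B}_A(\mathcal{H})$ is the set of bounded operators $T$ for which there exists a bounded $S$ with $\langle Tx,y\rangle_A=\langle x,Sy\rangle_A$ for all $x,y$. For an operator $T$ with $\|Tx\|_A\le\lambda\|x\|_A$ for some $\lambda>0$ and all $x$, $\|T\|_A=\sup\{\|Tx\|_A: \|x\|_A=1\}$, and $\omega_A(T)=\sup\{|\langle Tx,x\rangle_A|:\|x\|_A=1\}$. *)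

(* Defs.v *)
From mathcomp Require Import all_boot all_order all_algebra.
From mathcomp Require Import all_classical all_reals.
From mathcomp Require Export complex.
Set Implicit Arguments. Unset Strict Implicit. Unset Printing Implicit Defensive.
Import Order.TTheory GRing.Theory Num.Theory.
Local Open Scope ring_scope.
Local Open Scope classical_set_scope.

Section HilbertDefs.
Variable R : realType.
Local Notation C := (R[i]).
Variable V : lmodType C.
Variable ip : V -> V -> C.

Definition is_inner_product : Prop :=
  [/\ (forall (a : C) (x y z : V), ip (a *: x + y) z = a * ip x z + ip y z),
      (forall x y : V, ip y x = conjc (ip x y)),
      (forall x : V, 0 <= ip x x)
    & (forall x : V, ip x x = 0 -> x = 0)].

Definition hnorm (x : V) : R := Num.sqrt (complex.Re (ip x x)).

Definition is_complete : Prop :=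
  forall u : nat -> V,
    (forall e : R, 0 < e -> exists N : nat, forall m n : nat,
        (N <= m)%N -> (N <= n)%N -> hnorm (u m - u n) < e) ->
    exists l : V, forall e : R, 0 < e -> exists N : nat, forall n : nat,
        (N <= n)%N -> hnorm (u n - l) < e.

Definition is_hilbert : Prop := is_inner_product /\ is_complete.

Definition bounded_op (T : V -> V) : Prop :=
  (forall (a : C) (x y : V), T (a *: x + y) = a *: T x + T y) /\
  exists M : R, forall x : V, hnorm (T x) <= M * hnorm x.

Definition positive_op (A : V -> V) : Prop :=
  bounded_op A /\ forall x : V, 0 <= ip (A x) x.

Definition nonzero_op (A : V -> V) : Prop := exists x : V, A x <> 0.

Definition ipA (A : V -> V) (x y : V) : C := ip (A x) y.

(* ||x||_A = ||A^{1/2} x|| = sqrt <Ax,x> *)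
Definition normA (A : V -> V) (x : V) : R :=
  Num.sqrt (complex.Re (ipA A x x)).

Definition BA (A T : V -> V) : Prop :=
  bounded_op T /\
  exists S : V -> V, bounded_op S /\
    forall x y : V, ipA A (T x) y = ipA A x (S y).

Definition opnormA (A T : V -> V) : R :=
  sup [set normA A (T x) | x in [set x : V | normA A x = 1]].

Definition numradA (A T : V -> V) : R :=
  sup [set Normc.normc (ipA A (T x) x) | x in [set x : V | normA A x = 1]].

End HilbertDefs.

(* Main.v *)
Require Import Defs.
Set Warnings "-notation-overridden,-ambiguous-paths,-notation-incompatible-prefix,-deprecated".
From mathcomp Require Import all_boot all_order all_algebra.
From mathcomp Require Import all_classical all_reals.
From mathcomp Require Import complex.
From mathcomp Require Import ring lra.
Import Order.TTheory GRing.Theory Num.Theory.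
Local Open Scope ring_scope.
Set Implicit Arguments. Unset Strict Implicit.

Section Helpers.
Variable R : realType.
Local Notation C := R[i].
Lemma normcC (w : C) : `|w| = (Normc.normc w)%:C%C.
Proof. by case: w => a b; rewrite normc_def. Qed.
Lemma normc_ge0' (w : C) : 0 <= Normc.normc w.
Proof. by case: w => a b; exact: sqrtr_ge0. Qed.
Lemma conjcRM (r : R) (w : C) : conjc (r%:C%C * w) = r%:C%C * conjc w.
Proof. case: w => a b; apply/eqP; rewrite eq_complex /=; apply/andP; split; apply/eqP; ring. Qed.
Lemma Re_le_normc (w : C) : complex.Re w <= Normc.normc w.
Proof.
case: w => u v /=; apply: (le_trans (ler_norm u)); rewrite -sqrtr_sqr ler_sqrt.
  by rewrite lerDl sqr_ge0.
by rewrite addr_ge0 // sqr_ge0.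
Qed.
Lemma NRe_le_normc (w : C) : - complex.Re w <= Normc.normc w.
Proof.
case: w => u v /=; apply: (le_trans (_ : -u <= `|u|)); first by rewrite -normrN ler_norm.
rewrite -sqrtr_sqr ler_sqrt.
  by rewrite lerDl sqr_ge0.
by rewrite addr_ge0 // sqr_ge0.
Qed.
Lemma normc_conj (w : C) : Normc.normc (conjc w) = Normc.normc w.
Proof. by case: w => u v /=; rewrite sqrrN. Qed.
Lemma normc_real (r : R) : Normc.normc (r%:C%C) = `|r|.
Proof. by rewrite /= expr0n /= addr0 sqrtr_sqr. Qed.
Lemma Re_real (r : R) : complex.Re (r%:C%C) = r. Proof. by []. Qed.
Lemma ReRM (r : R) (w : C) : complex.Re (r%:C%C * w) = r * complex.Re w.
Proof. by case: w => u v /=; rewrite mul0r subr0. Qed.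

Lemma unit_phase (z : C) : exists c : C, Normc.normc c = 1 /\ c * z = (Normc.normc z)%:C%C.
Proof.
have [->|nz] := eqVneq z 0.
  by exists 1; rewrite mulr0 Normc.normc1 Normc.normc0.
have npos : 0 < Normc.normc z.
  rewrite lt_neqAle normc_ge0' andbT eq_sym; apply/eqP => /Normc.eq0_normc h.
  by move: nz; rewrite h eqxx.
exists (conjc z * ((Normc.normc z)^-1)%:C%C); split.
  by rewrite Normc.normcM normc_conj normc_real ger0_norm ?invr_ge0 ?ltW // mulfV ?gt_eqF.
rewrite mulrAC [conjc z * z]mulrC -sqr_normc normcC -rmorphXn -rmorphM /= expr2 -mulrA mulfV ?gt_eqF //.
by rewrite mulr1.
Qed.

Variable V : lmodType C.
Definition islin (f : V -> V) := forall (a : C) x y, f (a *: x + y) = a *: f x + f y.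

Section Lin.
Variable f : V -> V.
Hypothesis hf : forall (a : C) x y, f (a *: x + y) = a *: f x + f y.
Lemma lin0 : f 0 = 0.
Proof. have := hf 1 0 0; rewrite scaler0 addr0 scale1r => h.
by apply: (addrI (f 0)); rewrite addr0 -h. Qed.
Lemma linD x y : f (x + y) = f x + f y.
Proof. have := hf 1 x y; rewrite !scale1r. by []. Qed.
Lemma linZ a x : f (a *: x) = a *: f x.
Proof. by rewrite -[a *: x]addr0 hf lin0 addr0. Qed.
Lemma linN x : f (- x) = - f x.
Proof. by rewrite -scaleN1r linZ scaleN1r. Qed.
Lemma linB x y : f (x - y) = f x - f y.
Proof. by rewrite linD linN. Qed.
End Lin.

End Helpers.

Set Default Proof Using "All".
Section Form.
Variable R : realType.
Local Notation C := R[i].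
Variable V : lmodType C.
Variable B : V -> V -> C.
Hypothesis Blin : forall (a : C) (x y z : V), B (a *: x + y) z = a * B x z + B y z.
Hypothesis Bherm : forall x y : V, B y x = conjc (B x y).
Hypothesis Bpos : forall x : V, 0 <= B x x.

Lemma B0l z : B 0 z = 0.
Proof. have := Blin 1 0 0 z; rewrite scaler0 addr0 mul1r => h.
by apply: (addrI (B 0 z)); rewrite addr0 -h. Qed.
Lemma BDl x y z : B (x + y) z = B x z + B y z.
Proof. by rewrite -[x]scale1r Blin mul1r scale1r. Qed.
Lemma BZl a x z : B (a *: x) z = a * B x z.
Proof. by rewrite -[a *: x]addr0 Blin B0l addr0. Qed.
Lemma BNl x z : B (- x) z = - B x z.
Proof. by rewrite -scaleN1r BZl mulN1r. Qed.
Lemma BBl x y z : B (x - y) z = B x z - B y z.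
Proof. by rewrite BDl BNl. Qed.
Lemma BDr x y z : B z (x + y) = B z x + B z y.
Proof. by rewrite Bherm BDl rmorphD /= -!Bherm. Qed.
Lemma BZr a x z : B z (a *: x) = conjc a * B z x.
Proof. by rewrite Bherm BZl rmorphM /= -Bherm. Qed.
Lemma BNr x z : B z (- x) = - B z x.
Proof. by rewrite Bherm BNl rmorphN /= -Bherm. Qed.
Lemma BBr x y z : B z (x - y) = B z x - B z y.
Proof. by rewrite BDr BNr. Qed.
Lemma B0r z : B z 0 = 0.
Proof. by rewrite Bherm B0l conjc0. Qed.

Definition nB x := Num.sqrt (complex.Re (B x x)).

Lemma ReBxx_ge0 x : 0 <= complex.Re (B x x).
Proof. by have := Bpos x; rewrite lecE => /andP[]. Qed.
Lemma ImBxx x : complex.Im (B x x) = 0.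
Proof. exact: ger0_Im. Qed.
Lemma nB_ge0 x : 0 <= nB x. Proof. exact: sqrtr_ge0. Qed.
Lemma nB2 x : nB x ^+ 2 = complex.Re (B x x).
Proof. by rewrite sqr_sqrtr // ReBxx_ge0. Qed.
Lemma Bxx x : B x x = (nB x ^+ 2)%:C%C.
Proof. by rewrite nB2; move: (ImBxx x); case: (B x x) => a b /= ->. Qed.




Lemma CS x y : Normc.normc (B x y) <= nB x * nB y.
Proof.
set z := B x y. set m := Normc.normc z ^+ 2.
have hm : z * conjc z = m%:C%C by rewrite -sqr_normc normcC rmorphXn.
have key : forall r : R, 0 <= nB x ^+ 2 - 2 * r * m + r ^+ 2 * m * nB y ^+ 2.
  move=> r; have := ReBxx_ge0 (x - (r%:C%C * z) *: y).
  suff -> : B (x - (r%:C%C*z) *: y) (x - (r%:C%C*z)*:y) =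
     (nB x ^+ 2 - 2 * r * m + r ^+ 2 * m * nB y ^+ 2)%:C%C by [].
  rewrite BBl !BBr !BZl !BZr (Bherm x y) -/z !Bxx.
  rewrite conjcRM.
  rewrite !(rmorphB, rmorphD, rmorphM, rmorphXn, rmorph_nat) /=.
  have hm' : z * conjc z = (Normc.normc z)%:C%C * (Normc.normc z)%:C%C by rewrite hm /m rmorphXn expr2.
  rewrite -hm'.
  ring.
have m0 : 0 <= m by rewrite /m exprn_ge0 // normc_ge0'.
have a0 : 0 <= nB x ^+ 2 by rewrite exprn_ge0 // nB_ge0.
have b0 : 0 <= nB y ^+ 2 by rewrite exprn_ge0 // nB_ge0.
have hmab : m <= nB x ^+ 2 * nB y ^+ 2.
  have [bz|bp] := eqVneq (nB y ^+ 2) 0.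
    rewrite bz mulr0; have [//|mp] := lerP m 0.
    have := key ((nB x ^+ 2 + 1) / (2 * m)).
    have hr : 2 * ((nB x ^+ 2 + 1) / (2 * m)) * m = nB x ^+ 2 + 1.
      by field; rewrite gt_eqF.
    rewrite bz mulr0 hr; lra.
  have := key (nB y ^+ 2)^-1.
  have hb : nB y ^+ 2 * (nB y ^+ 2)^-1 = 1 by rewrite mulfV.
  move: (nB y ^+ 2) (nB y ^+ 2)^-1 hb bp b0 => u v huv _ hu0 h.
  have := mulr_ge0 hu0 h.
  have -> : u * (nB x ^+ 2 - 2 * v * m + v ^+ 2 * m * u) = nB x ^+ 2 * u - 2 * (u * v) * m + (u * v) ^+ 2 * m by ring.
  rewrite huv; lra.
have := normc_ge0' z; have := mulr_ge0 (nB_ge0 x) (nB_ge0 y).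
rewrite /m -exprMn in hmab; move: hmab.
move: (Normc.normc z) (nB x * nB y) => p q; nra.
Qed.




Lemma BZZ (f : V -> V) (hf : islin f) (r : R) y :
  B (f (r%:C%C *: y)) (r%:C%C *: y) = (r ^+ 2)%:C%C * B (f y) y.
Proof. by rewrite linZ // BZl BZr conjc_real mulrA mulrC -rmorphM /= expr2 mulrC. Qed.

Lemma nBZ (r : R) y : nB (r%:C%C *: y) = `|r| * nB y.
Proof.
rewrite /nB BZl BZr conjc_real mulrA -rmorphM /= ReRM sqrtrM.
  by rewrite -expr2 sqrtr_sqr.
by rewrite -expr2 sqr_ge0.
Qed.

End Form.

Notation nBg := nB (only parsing).

Section Core.
Variable R : realType.
Local Notation C := R[i].
Variable V : lmodType C.
Variable B : V -> V -> C.
Hypothesis Blin : forall (a : C) (x y z : V), B (a *: x + y) z = a * B x z + B y z.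
Hypothesis Bherm : forall x y : V, B y x = conjc (B x y).
Hypothesis Bpos : forall x : V, 0 <= B x x.
Let BDl_ := BDl Blin Bherm Bpos.
Let BZl_ := BZl Blin Bherm Bpos.
Let BNl_ := BNl Blin Bherm Bpos.
Let BBl_ := BBl Blin Bherm Bpos.
Let BDr_ := BDr Blin Bherm Bpos.
Let BZr_ := BZr Blin Bherm Bpos.
Let BBr_ := BBr Blin Bherm Bpos.
Let nB_ge0_ := nB_ge0 Blin Bherm Bpos.
Let nB2_ := nB2 Blin Bherm Bpos.
Let Bxx_ := Bxx Blin Bherm Bpos.
Let CS_ := CS Blin Bherm Bpos.
Let nBZ_ := nBZ Blin Bherm Bpos.
Local Notation nB := (nB B).

Variables T T' S S' : V -> V.
Hypotheses (hTl : islin T) (hT'l : islin T') (hSl : islin S) (hS'l : islin S').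
Hypothesis adjT : forall x y, B (T x) y = B x (T' y).
Hypothesis adjS : forall x y, B (S x) y = B x (S' y).

Lemma adjT' x y : B (T' x) y = B x (T y).
Proof. by rewrite (Bherm y (T' x)) -adjT -Bherm. Qed.
Lemma adjS' x y : B (S' x) y = B x (S y).
Proof. by rewrite (Bherm y (S' x)) -adjS -Bherm. Qed.

Lemma adj_bound (U U' : V -> V) (k : R) : 0 < k ->
  (forall x y, B (U' x) y = B x (U y)) ->
  (forall u, nB (U u) <= k * nB u) -> forall u, nB (U' u) <= k * nB u.
Proof.
move=> kp hadj hU u.
have h : nB (U' u) ^+ 2 <= k * nB u * nB (U' u).
  rewrite nB2_ hadj; apply: (le_trans (Re_le_normc _)); apply: (le_trans (CS_ _ _)).
  rewrite -mulrA [k * _]mulrC -mulrA ler_wpM2l ?nB_ge0_ // mulrC; exact: hU.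
have := nB_ge0_ (U' u); have := mulr_ge0 (ltW kp) (nB_ge0_ u); move: h.
move: (nB (U' u)) (k * nB u) => q p; nra.
Qed.


Variables a b W : R.
Hypotheses (ha : 0 < a) (hb : 0 < b).
Hypothesis hT : forall u, nB (T u) <= a * nB u.
Hypothesis hS : forall u, nB (S u) <= b * nB u.
Hypothesis hW : forall u, Normc.normc (B (S (T u)) u) <= W * nB u ^+ 2.
Variable c : C.
Hypothesis hc : Normc.normc c = 1.

Lemma hT' u : nB (T' u) <= a * nB u.
Proof. exact: (adj_bound ha adjT' hT). Qed.
Lemma hS' u : nB (S' u) <= b * nB u.
Proof. exact: (adj_bound hb adjS' hS). Qed.

Definition phi y := complex.Re (c * B (T (S y)) y).

Lemma normcTS y : Normc.normc (B (T (S y)) y) <= a * b * nB y ^+ 2.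
Proof.
apply: (le_trans (CS_ _ _)); rewrite expr2 mulrA ler_wpM2r ?nB_ge0_ //.
apply: (le_trans (hT _)); rewrite -mulrA ler_wpM2l ?(ltW ha) //.
Qed.

Lemma phi_le y : phi y <= a * b * nB y ^+ 2.
Proof.
apply: (le_trans (Re_le_normc _)); rewrite Normc.normcM hc mul1r; exact: normcTS.
Qed.
Lemma phi_ge y : - phi y <= a * b * nB y ^+ 2.
Proof.
apply: (le_trans (NRe_le_normc _)); rewrite Normc.normcM hc mul1r; exact: normcTS.
Qed.

Definition Z y := c *: T (S y) + conjc c *: S' (T' y).

Lemma Zlin : islin Z.
Proof.
move=> k x y; rewrite /Z !(linD hTl, linZ hTl, linD hSl, linZ hSl, linD hT'l, linZ hT'l, linD hS'l, linZ hS'l).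
rewrite !scalerDr !scalerA [c * k]mulrC [conjc c * k]mulrC -!scalerA.
by rewrite addrACA.
Qed.

Lemma BZy y : B (Z y) y = (2 * phi y)%:C%C.
Proof.
rewrite /Z BDl_ !BZl_ adjS' adjT (Bherm (S y) (T' y)) -adjT.
set w := B (T (S y)) y.
have -> : conjc c * conjc w = conjc (c * w) by rewrite rmorphM.
by rewrite addcJ rmorphM /= rmorph_nat.
Qed.


Lemma Zsym u v : B (Z u) v = B u (Z v).
Proof.
rewrite /Z BDl_ !BZl_ adjT adjS adjS' adjT' BDr_ !BZr_ conjcK addrC.
by [].
Qed.

Lemma ReD (x y : C) : complex.Re (x + y) = complex.Re x + complex.Re y.
Proof. by case: x; case: y. Qed.
Lemma ReB (x y : C) : complex.Re (x - y) = complex.Re x - complex.Re y.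
Proof. by case: x; case: y. Qed.

Lemma core (lam : R) : 0 < lam -> (forall y, phi y <= lam * nB y ^+ 2) ->
  (forall eps, 0 < eps -> exists y, nB y = 1 /\ lam - eps < phi y) ->
  lam <= (W + a * b) / 2.
Proof.
move=> lp hub had; rewrite leNgt; apply/negP => hlt.
set L := 2 * lam.
pose F u v := B (L%:C%C *: u - Z u) v.
have FE u v : F u v = L%:C%C * B u v - B (Z u) v by rewrite /F BBl_ BZl_.
have Flin : forall (k : C) x y z, F (k *: x + y) z = k * F x z + F y z.
  move=> k x y z; rewrite /F.
  have -> : L%:C%C *: (k *: x + y) - Z (k *: x + y) = k *: (L%:C%C *: x - Z x) + (L%:C%C *: y - Z y).
    by rewrite (Zlin k x y) scalerDr scalerBr !scalerA [L%:C%C * k]mulrC opprD addrACA.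
  by rewrite Blin.
have Fherm : forall x y, F y x = conjc (F x y).
  move=> x y; rewrite !FE rmorphB /= conjcRM -!Bherm Zsym //.
have Fxx : forall x, F x x = (L * nB x ^+ 2 - 2 * phi x)%:C%C.
  by move=> x; rewrite FE Bxx_ BZy -rmorphM -rmorphB.
have Fpos : forall x, 0 <= F x x.
  move=> x; rewrite Fxx ler0c subr_ge0 /L -mulrA ler_wpM2l //; exact: hub.
have nF2 x : Num.sqrt (complex.Re (F x x)) ^+ 2 = L * nB x ^+ 2 - 2 * phi x.
  by rewrite sqr_sqrtr Fxx //; have := Fpos x; rewrite Fxx ler0c.
have abp : 0 < a * b by rewrite mulr_gt0.
set g := L - (W + a * b).
have gp : 0 < g by rewrite /g /L; lra.
set kap := L + 2 * (a * b).
have kp : 0 < kap by rewrite /kap /L; lra.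
set eps := Num.min (lam / 2) (g ^+ 2 * lam / (8 * (a * b) * kap)).
have ep : 0 < eps.
  rewrite /eps lt_min; apply/andP; split; first lra.
  apply: divr_gt0; first by rewrite mulr_gt0 // exprn_gt0.
  by rewrite !mulr_gt0 // ltr0n.
have e1 : eps <= lam / 2 by rewrite /eps ge_min lexx.
have e2 : eps <= g ^+ 2 * lam / (8 * (a * b) * kap) by rewrite /eps ge_min lexx orbT.
have [y [hy1 hy2]] := had eps ep.
set v := L%:C%C *: y - Z y.
have hv : nB v ^+ 2 <= 2 * eps * kap.
  have h1 : nB v ^+ 2 <= Normc.normc (F y v).
    by rewrite nB2_; exact: Re_le_normc.
  have h2 := CS Flin Fherm Fpos y v.
  have h3 : nBg F y ^+ 2 <= 2 * eps.
    rewrite -[nBg F y ^+ 2]/(Num.sqrt (complex.Re (F y y)) ^+ 2) nF2 hy1 expr1n mulr1 /L; lra.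
  have h4 : nBg F v ^+ 2 <= kap * nB v ^+ 2.
    rewrite -[nBg F v ^+ 2]/(Num.sqrt (complex.Re (F v v)) ^+ 2) nF2 /kap /L; have := phi_ge v; lra.
  have p0 := nB_ge0 Flin Fherm Fpos y; have q0 := nB_ge0 Flin Fherm Fpos v.
  have t0 : 0 <= nB v ^+ 2 by rewrite exprn_ge0 // nB_ge0_.
  have h5 := le_trans h1 h2.
  move: h3 h4 h5 t0 p0 q0.
  move: (nBg F y) (nBg F v) (nB v ^+ 2) => p q t h3 h4 h5 t0 p0 q0.
  have s1 : t * t <= (p * p) * (q * q).
    have : t * t <= (p * q) * (p * q) by apply: ler_pM.
    by rewrite mulrACA.
  have s2 : (p * p) * (q * q) <= (2 * eps) * (kap * t).
    by apply: ler_pM; rewrite ?mulr_ge0 // -expr2.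
  have [->|tp] := eqVneq t 0; first by rewrite !mulr_ge0 // ltW.
  have tp' : 0 < t by rewrite lt_neqAle eq_sym tp.
  have := le_trans s1 s2; move: (eps * kap) => ek; nra.
set P := nB (S y). set Qn := nB (T' y).
have P0 : 0 <= P by exact: nB_ge0_. have Q0 : 0 <= Qn by exact: nB_ge0_.
set N := a / b * P ^+ 2 + b / a * Qn ^+ 2.
have an0 : a != 0 by rewrite gt_eqF. have bn0 : b != 0 by rewrite gt_eqF.
have hPQ : 2 * (P * Qn) <= N.
  rewrite -subr_ge0.
  have -> : N - 2 * (P * Qn) = (a * P - b * Qn) ^+ 2 / (a * b).
    by rewrite /N; field; rewrite an0 bn0.
  by rewrite divr_ge0 ?sqr_ge0 // ltW.
have hN : 2 * phi y <= N.
  apply: le_trans hPQ; rewrite ler_pM2l ?ltr0n //.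
  apply: (le_trans (Re_le_normc _)); rewrite Normc.normcM hc mul1r adjT; exact: CS_.
have hX : (a * P + b * Qn) ^+ 2 <= 2 * (a * b) * N.
  rewrite -subr_ge0.
  have -> : 2 * (a * b) * N - (a * P + b * Qn) ^+ 2 = (a * P - b * Qn) ^+ 2.
    by rewrite /N; field; rewrite an0 bn0.
  exact: sqr_ge0.
have hZS : S (Z y) = c *: S (T (S y)) + conjc c *: S (S' (T' y)).
  by rewrite /Z (linD hSl) !(linZ hSl).
have hZT : T' (Z y) = c *: T' (T (S y)) + conjc c *: T' (S' (T' y)).
  by rewrite /Z (linD hT'l) !(linZ hT'l).
have u1 : Normc.normc (B (S (Z y)) (S y)) <= W * P ^+ 2 + b ^+ 2 * (P * Qn).
  rewrite hZS BDl_ !BZl_; apply: (le_trans (le_normcD _ _)).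
  rewrite !Normc.normcM normc_conj hc !mul1r; apply: lerD; first exact: hW.
  rewrite adjS; apply: (le_trans (CS_ _ _)).
  have := hS' (T' y); have := hS' (S y); rewrite -/P -/Qn => h1 h2.
  have := ler_pM (nB_ge0_ _) (nB_ge0_ _) h2 h1; rewrite -/P -/Qn => h.
  apply: (le_trans h); rewrite expr2; lra.
have u2 : Normc.normc (B (T' (Z y)) (T' y)) <= a ^+ 2 * (P * Qn) + W * Qn ^+ 2.
  rewrite hZT BDl_ !BZl_; apply: (le_trans (le_normcD _ _)).
  rewrite !Normc.normcM normc_conj hc !mul1r; apply: lerD.
    rewrite adjT'; apply: (le_trans (CS_ _ _)).
    have := hT (S y); have := hT (T' y); rewrite -/P -/Qn => h1 h2.
    have := ler_pM (nB_ge0_ _) (nB_ge0_ _) h2 h1; rewrite -/P -/Qn => h.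
    apply: (le_trans h); rewrite expr2; lra.
  rewrite adjT' adjS' (Bherm (S (T (T' y))) (T' y)) normc_conj; exact: hW.
set Qc := (a / b)%:C%C * B (S (Z y)) (S y) + (b / a)%:C%C * B (T' (Z y)) (T' y).
have ab0 : 0 <= a / b by rewrite divr_ge0 // ltW.
have ba0 : 0 <= b / a by rewrite divr_ge0 // ltW.
have up : complex.Re Qc <= (W + a * b) * N.
  apply: (le_trans (Re_le_normc _)); apply: (le_trans (le_normcD _ _)).
  rewrite !Normc.normcM !normc_real !ger0_norm //.
  apply: (le_trans (lerD (ler_wpM2l ab0 u1) (ler_wpM2l ba0 u2))).
  have -> : a / b * (W * P ^+ 2 + b ^+ 2 * (P * Qn)) + b / a * (a ^+ 2 * (P * Qn) + W * Qn ^+ 2)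
     = W * N + (a * b) * (2 * (P * Qn)) by rewrite /N; field; rewrite an0 bn0.
  have := ler_wpM2l (ltW abp) hPQ; lra.
have hZ : Z y = L%:C%C *: y - v by rewrite /v opprB addrC subrK.
have low : L * N - nB v * (a * P + b * Qn) <= complex.Re Qc.
  rewrite /Qc hZ (linB hSl) (linZ hSl) (linB hT'l) (linZ hT'l) !BBl_ !BZl_ !Bxx_ -/P -/Qn.
  rewrite -!rmorphM ReD !ReRM !ReB /=.
  have r1 : complex.Re (B (S v) (S y)) <= b * nB v * P.
    apply: (le_trans (Re_le_normc _)); apply: (le_trans (CS_ _ _)).
    by rewrite ler_wpM2r // hS.
  have r2 : complex.Re (B (T' v) (T' y)) <= a * nB v * Qn.
    apply: (le_trans (Re_le_normc _)); apply: (le_trans (CS_ _ _)).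
    by rewrite ler_wpM2r // hT'.
  have r1' := ler_wpM2l ab0 r1; have r2' := ler_wpM2l ba0 r2.
  have e1' : a / b * (b * nB v * P) = a * nB v * P by field.
  have e2' : b / a * (a * nB v * Qn) = b * nB v * Qn by field.
  rewrite e1' in r1'; rewrite e2' in r2'.
  have -> : a / b * (L * P ^+ 2 - complex.Re (B (S v) (S y))) + b / a * (L * Qn ^+ 2 - complex.Re (B (T' v) (T' y)))
    = L * N - (a / b * complex.Re (B (S v) (S y)) + b / a * complex.Re (B (T' v) (T' y))).
    by rewrite /N; field; rewrite an0 bn0.
  lra.
have key : g * N <= nB v * (a * P + b * Qn).
  have := le_trans low up; rewrite /g mulrBl; lra.
have Nlam : lam <= N by lra.
have Np : 0 < N by lra.
have d0 := nB_ge0_ v.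
have X0 : 0 <= a * P + b * Qn by rewrite addr_ge0 // mulr_ge0 // ltW.
have gN0 : 0 <= g * N by rewrite mulr_ge0 // ltW.
have k2 : (g * N) ^+ 2 <= (2 * eps * kap) * (2 * (a * b) * N).
  apply: (le_trans (_ : _ <= (nB v * (a * P + b * Qn)) ^+ 2)).
    by rewrite ler_pXn2r // ?nnegrE // mulr_ge0.
  by rewrite exprMn ler_pM // exprn_ge0.
have k3 : g ^+ 2 * N <= 4 * (a * b) * kap * eps.
  rewrite -(ler_pM2r Np); move: k2; rewrite exprMn.
  set G := g ^+ 2; set K := a * b; nra.
have k4 : 8 * (a * b) * kap * eps <= g ^+ 2 * lam.
  move: e2; rewrite ler_pdivlMr ?mulr_gt0 ?ltr0n //; lra.
have g2 : 0 < g ^+ 2 by rewrite exprn_gt0.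
have : g ^+ 2 * lam <= g ^+ 2 * N by rewrite ler_pM2l.
have hK : 4 * (a * b) * kap * eps = (8 * (a * b) * kap * eps) / 2 by field.
rewrite hK in k3.
move: (8 * (a * b) * kap * eps) k3 k4 => K k3 k4.
move: (g ^+ 2) g2 k3 k4 => G g2 k3 k4 h; nra.
Qed.

End Core.

Section SupLemmas.
Local Open Scope classical_set_scope.
Variable R : realType.
Variable T : Type.
Variable U : set T.
Variable f : T -> R.
Variable M : R.
Hypothesis hM : forall y, U y -> f y <= M.

Lemma img_ub : has_ubound [set f y | y in U].
Proof. by exists M => _ [z Uz <-]; exact: hM. Qed.

Lemma sup_ub_img y : U y -> f y <= sup [set f y | y in U].
Proof. move=> Uy; apply: ub_le_sup; first exact: img_ub. by exists y. Qed.

Lemma sup_adh_img y0 : U y0 -> forall eps, 0 < eps ->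
  exists y, U y /\ sup [set f y | y in U] - eps < f y.
Proof.
move=> U0 eps ep.
have hs : has_sup [set f y | y in U] by split; [exists (f y0), y0 | exact: img_ub].
have [e [y Uy fe] he] := sup_adherent ep hs.
by exists y; split => //; rewrite fe.
Qed.

Lemma sup_le_img (K : R) : 0 <= K -> (forall y, U y -> f y <= K) ->
  sup [set f y | y in U] <= K.
Proof.
move=> K0 hK; case: (pselect (exists y, U y)) => [[y Uy]|nU].
  apply: ge_sup; first by exists (f y), y.
  by move=> _ [z Uz <-]; exact: hK.
have -> : [set f y | y in U] = set0.
  apply/seteqP; split=> [e [z Uz _]|e []]; by case: nU; exists z.
by rewrite sup0.
Qed.

Lemma sup_ge0_img : (forall y, U y -> 0 <= f y) -> 0 <= sup [set f y | y in U].
Proof.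
move=> h0; case: (pselect (exists y, U y)) => [[y Uy]|nU].
  exact: le_trans (h0 _ Uy) (sup_ub_img Uy).
have -> : [set f y | y in U] = set0.
  apply/seteqP; split=> [e [z Uz _]|e []]; by case: nU; exists z.
by rewrite sup0.
Qed.
End SupLemmas.

Lemma geom_bound (R : realType) (q M c0 : R) : 0 <= q -> 0 <= M ->
  (forall k : nat, q ^+ k <= c0 * M ^+ k) -> q <= M.
Proof.
move=> q0 M0 h; rewrite leNgt; apply/negP => qM.
have Mp : 0 < M.
  rewrite lt_neqAle M0 andbT; apply/eqP => M00.
  by move: (h 1%N); rewrite !expr1 -M00 mulr0 => hq; lra.
set r := q / M.
have r1 : 1 < r by rewrite /r ltr_pdivlMr // mul1r.
have hr : forall k : nat, r ^+ k <= c0.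
  move=> k; rewrite /r exprMn exprVn ler_pdivrMr ?exprn_gt0 //; exact: h.
have bern : forall k : nat, 1 + k%:R * (r - 1) <= r ^+ k.
  elim=> [|k IH]; first by rewrite mul0r addr0 expr0.
  rewrite exprS; apply: (le_trans _ (ler_wpM2l (ltW (lt_trans ltr01 r1)) IH)).
  rewrite -natr1; have := mulr_ge0 (ler0n R k) (sqr_ge0 (r - 1)); nra.
have c00 : 0 <= c0 by apply: le_trans (hr 0%N); rewrite expr0.
have rp : 0 < r - 1 by rewrite subr_gt0.
have := archi_boundP (divr_ge0 c00 (ltW rp)); set n := Num.Def.archi_bound _ => hn.
have := le_trans (bern n) (hr n).
rewrite ltr_pdivrMr // in hn; lra.
Qed.

Section Growth.
Variable R : realType.
Local Notation C := R[i].
Variable V : lmodType C.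
Variable B : V -> V -> C.
Hypothesis Blin : forall (a : C) (x y z : V), B (a *: x + y) z = a * B x z + B y z.
Hypothesis Bherm : forall x y : V, B y x = conjc (B x y).
Hypothesis Bpos : forall x : V, 0 <= B x x.
Let nB_ge0_ := nB_ge0 Blin Bherm Bpos.
Let nB2_ := nB2 Blin Bherm Bpos.
Let CS_ := CS Blin Bherm Bpos.
Let nBZ_ := nBZ Blin Bherm Bpos.
Local Notation nB := (nB B).

Variables (U U' : V -> V) (hUl : islin U) (hU'l : islin U').
Hypothesis adjU : forall x y, B (U x) y = B x (U' y).
Let P := fun x => U' (U x).
Variable Mq : R.
Hypothesis Mq0 : 0 <= Mq.
Hypothesis hgrow : forall x, exists c0, forall k, nB (iter k P x) ^+ 2 <= c0 * Mq ^+ k.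

Lemma adjU' x y : B (U' x) y = B x (U y).
Proof. by rewrite (Bherm y (U' x)) -adjU -Bherm. Qed.

Lemma Psym u v : B (P u) v = B u (P v).
Proof. by rewrite /P adjU' adjU. Qed.

Lemma logconv x k : nB (iter k.+1 P x) ^+ 2 <= nB (iter k P x) * nB (iter k.+2 P x).
Proof.
rewrite nB2_ !iterS Psym -!iterS; apply: (le_trans (Re_le_normc _)); exact: CS_.
Qed.

Lemma unit_bound x : nB x = 1 -> nB (U x) ^+ 2 <= Num.sqrt Mq.
Proof.
move=> hx.
pose s k := nB (iter k P x).
have s0 : s 0%N = 1 by [].
have sge k : 0 <= s k by exact: nB_ge0_.
have step : forall k, s 1%N * s k <= s k.+1.
  elim=> [|k IH]; first by rewrite s0 mulr1.
  have lc : s k.+1 ^+ 2 <= s k * s k.+2 by exact: logconv.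
  have [z|nz] := eqVneq (s k) 0.
    have : s k.+1 ^+ 2 <= 0 by rewrite z mul0r in lc.
    move=> h; have e : s k.+1 = 0.
      by apply/eqP; rewrite -sqrf_eq0 eq_le h sqr_ge0.
    by rewrite e mulr0.
  have kp : 0 < s k by rewrite lt_neqAle eq_sym nz sge.
  rewrite -(ler_pM2l kp).
  apply: (le_trans _ lc).
  rewrite mulrA [s k * _]mulrC expr2; apply: ler_wpM2r => //.
have pw : forall k, s 1%N ^+ k <= s k.
  elim=> [|k IH]; first by rewrite expr0 s0.
  rewrite exprS; apply: le_trans (step k); exact: ler_wpM2l.
have [c0 hc0] := hgrow x.
have hs1 : s 1%N ^+ 2 <= Mq.
  apply: (geom_bound (c0 := c0)) => //; first exact: sqr_ge0.
  move=> k; apply: le_trans (hc0 k); rewrite -exprM mulnC exprM.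
  by rewrite ler_pXn2r // ?nnegrE ?exprn_ge0 //; exact: pw.
have hs1' : s 1%N <= Num.sqrt Mq.
  have := sqr_sqrtr Mq0; have := sqrtr_ge0 Mq; have := sge 1%N; move: hs1.
  move: (Num.sqrt Mq) (s 1%N) => t u; nra.
apply: le_trans hs1'.
rewrite nB2_ adjU; apply: (le_trans (Re_le_normc _)); apply: (le_trans (CS_ _ _)).
by rewrite hx mul1r.
Qed.

Lemma Ubound x : nB (U x) ^+ 2 <= Num.sqrt Mq * nB x ^+ 2.
Proof.
have [z|nz] := eqVneq (nB x) 0.
  rewrite z expr0n mulr0 nB2_ adjU; apply: (le_trans (Re_le_normc _)).
  by apply: (le_trans (CS_ _ _)); rewrite z mul0r.
have xp : 0 < nB x by rewrite lt_neqAle eq_sym nz nB_ge0_.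
set r := (nB x)^-1.
have rp : 0 < r by rewrite invr_gt0.
have h1 : nB (r%:C%C *: x) = 1 by rewrite nBZ_ gtr0_norm // mulVf.
have := unit_bound h1; rewrite (linZ hUl) nBZ_ gtr0_norm // exprMn.
move=> h; rewrite -(ler_pM2l (exprn_gt0 2 rp)); apply: (le_trans h).
by rewrite mulrCA -exprMn mulVf // expr1n mulr1.
Qed.

End Growth.

Section Final.
Local Open Scope classical_set_scope.
Variable R : realType.
Local Notation C := R[i].
Variable V : lmodType C.
Variable B : V -> V -> C.
Hypothesis Blin : forall (a : C) (x y z : V), B (a *: x + y) z = a * B x z + B y z.
Hypothesis Bherm : forall x y : V, B y x = conjc (B x y).
Hypothesis Bpos : forall x : V, 0 <= B x x.
Let nB_ge0_ := nB_ge0 Blin Bherm Bpos.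
Let CS_ := CS Blin Bherm Bpos.
Let nBZ_ := nBZ Blin Bherm Bpos.
Let BZZ_ := BZZ Blin Bherm Bpos.
Local Notation nB := (nB B).

Variables T T' S S' : V -> V.
Hypotheses (hTl : islin T) (hT'l : islin T') (hSl : islin S) (hS'l : islin S').
Hypothesis adjT : forall x y, B (T x) y = B x (T' y).
Hypothesis adjS : forall x y, B (S x) y = B x (S' y).
Variables a b W : R.
Hypothesis hT : forall u, nB (T u) <= a * nB u.
Hypothesis hS : forall u, nB (S u) <= b * nB u.
Hypothesis hW : forall u, Normc.normc (B (S (T u)) u) <= W * nB u ^+ 2.

Lemma TSlin : islin (fun y => T (S y)).
Proof. by move=> k u w; rewrite (hSl k u w) (hTl k). Qed.

Lemma final x : nB x = 1 -> Normc.normc (B (T (S x)) x) <= (W + a * b) / 2.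
Proof.
move=> hx.
have W0 : 0 <= W.
  have := hW x; rewrite hx expr1n mulr1; apply: le_trans; exact: normc_ge0'.
have a0 : 0 <= a by have := hT x; rewrite hx mulr1; apply: le_trans; exact: nB_ge0_.
have b0 : 0 <= b by have := hS x; rewrite hx mulr1; apply: le_trans; exact: nB_ge0_.
have hab : Normc.normc (B (T (S x)) x) <= a * b.
  apply: (le_trans (CS_ _ _)); rewrite hx mulr1; apply: (le_trans (hT _)).
  by rewrite ler_wpM2l //; have := hS x; rewrite hx mulr1.
have [ab0|abn] := eqVneq (a * b) 0.
  by rewrite ab0 in hab *; lra.
have ap : 0 < a by rewrite lt_neqAle a0 andbT eq_sym; apply: contraNneq abn => ->; rewrite mul0r.
have bp : 0 < b by rewrite lt_neqAle b0 andbT eq_sym; apply: contraNneq abn => ->; rewrite mulr0.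
have [c [hc hcz]] := unit_phase (B (T (S x)) x).
set U := [set y | nB y = 1].
set f := phi B T S c.
have fM : forall y, U y -> f y <= a * b.
  move=> y Uy; have := phi_le Blin Bherm Bpos hTl hT'l hSl hS'l adjT adjS ap bp hT hS hW hc y.
  by rewrite Uy expr1n mulr1.
set lam := sup [set f y | y in U].
have fx : Normc.normc (B (T (S x)) x) = f x by rewrite /f /phi hcz.
have fxl : f x <= lam := sup_ub_img fM (hx : U x).
have [lle|lp] := lerP lam 0; first by lra.
have hub : forall y, f y <= lam * nB y ^+ 2.
  move=> y; have [z|nz] := eqVneq (nB y) 0.
    have := phi_le Blin Bherm Bpos hTl hT'l hSl hS'l adjT adjS ap bp hT hS hW hc y.
    by rewrite z expr0n !mulr0.
  have yp : 0 < nB y by rewrite lt_neqAle eq_sym nz nB_ge0_.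
  set r := (nB y)^-1.
  have rp : 0 < r by rewrite invr_gt0.
  have h1 : U (r%:C%C *: y) by rewrite /U /= nBZ_ gtr0_norm // mulVf.
  have := sup_ub_img fM h1; rewrite -/lam /f /phi (BZZ_ TSlin) mulrCA ReRM -/(phi B T S c y) -/f.
  move=> h; rewrite -(ler_pM2l (exprn_gt0 2 rp)); apply: (le_trans h).
  by rewrite mulrCA -exprMn mulVf // expr1n mulr1.
have had : forall eps, 0 < eps -> exists y, nB y = 1 /\ lam - eps < f y.
  by move=> eps ep; have [y [Uy hy]] := sup_adh_img fM (hx : U x) ep; exists y.
have := core Blin Bherm Bpos hTl hT'l hSl hS'l adjT adjS ap bp hT hS hW hc lp hub had.
by rewrite fx; apply: le_trans.
Qed.

End Final.

Section Hom.
Variable R : realType.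
Local Notation C := R[i].
Variable V : lmodType C.
Variable B : V -> V -> C.
Hypothesis Blin : forall (a : C) (x y z : V), B (a *: x + y) z = a * B x z + B y z.
Hypothesis Bherm : forall x y : V, B y x = conjc (B x y).
Hypothesis Bpos : forall x : V, 0 <= B x x.
Let nB_ge0_ := nB_ge0 Blin Bherm Bpos.
Let nBZ_ := nBZ Blin Bherm Bpos.
Local Notation nB := (nB B).

Lemma hom_bound (g : V -> R) (d : nat) (K : R) : (0 < d)%N ->
  (forall (r : R) u, 0 < r -> g (r%:C%C *: u) = r ^+ d * g u) ->
  (forall u, nB u = 0 -> g u <= 0) -> (forall u, nB u = 1 -> g u <= K) ->
  forall u, g u <= K * nB u ^+ d.
Proof.
move=> d0 hg h0 h1 u; have [z|nz] := eqVneq (nB u) 0.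
  by rewrite z expr0n gtn_eqF // mulr0; exact: h0.
have up : 0 < nB u by rewrite lt_neqAle eq_sym nz nB_ge0_.
set r := (nB u)^-1.
have rp : 0 < r by rewrite invr_gt0.
have := h1 (r%:C%C *: u); rewrite nBZ_ gtr0_norm // mulVf // hg // => /(_ erefl) h.
rewrite -(ler_pM2l (exprn_gt0 d rp)); apply: (le_trans h).
by rewrite mulrCA -exprMn mulVf // expr1n mulr1.
Qed.
End Hom.

Lemma polar (R : realType) (V : lmodType R[i]) (ip : V -> V -> R[i])
  (ipl : forall (a : R[i]) (x y z : V), ip (a *: x + y) z = a * ip x z + ip y z)
  (iph : forall x y : V, ip y x = conjc (ip x y))
  (ipp : forall x : V, 0 <= ip x x)
  (A : V -> V) (Alin : islin A) (Apos : forall x, 0 <= ip (A x) x) :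
  forall x y, ip (A y) x = conjc (ip (A x) y).
Proof.
move=> x y.
have e1 := ger0_Im (Apos (x + y)).
have e2 := ger0_Im (Apos (x + 'i%C *: y)).
rewrite (linD Alin) (BDl ipl iph ipp) !(BDr ipl iph ipp) in e1.
rewrite (linD Alin) (linZ Alin) (BDl ipl iph ipp) !(BDr ipl iph ipp) !(BZl ipl iph ipp) !(BZr ipl iph ipp) in e2.
have hp := ger0_Im (Apos x); have hq := ger0_Im (Apos y).
move: e1 e2 hp hq; move: (ip (A x) x) (ip (A x) y) (ip (A y) x) (ip (A y) y).
move=> [p1 p2] [u1 u2] [w1 w2] [q1 q2] /= e1 e2 hp hq.
apply/eqP; rewrite eq_complex /=; apply/andP; split; apply/eqP; lra.
Qed.

Unset Implicit Arguments.

Theorem corollary2p8 (R : realType) (V : lmodType R[i]) (ip : V -> V -> R[i])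
  (A T S : V -> V) :
  is_hilbert ip ->
  positive_op ip A -> nonzero_op A ->
  BA ip A T -> BA ip A S ->
  numradA ip A (T \o S)
    <= (numradA ip A (S \o T) + opnormA ip A T * opnormA ip A S) / 2.
Proof.
move=> [[ipl iph ipp _] _] [[Alin [MA hMA]] Apos] _.
move=> [[Tl [MT hMT]] [T' [[T'l [MT' hMT']] adjT]]].
move=> [[Sl [MS hMS]] [S' [[S'l [MS' hMS']] adjS]]].
pose B := ipA ip A.
have Blin : forall (k : R[i]) x y z, B (k *: x + y) z = k * B x z + B y z.
  by move=> k x y z; rewrite /B /ipA (Alin k x y) ipl.
have Bherm : forall x y, B y x = conjc (B x y) := polar ipl iph ipp Alin Apos.
have Bpos : forall x, 0 <= B x x := Apos.
have hn0 : forall x, 0 <= hnorm ip x := nB_ge0 ipl iph ipp.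
have hnormb : forall (U : V -> V) M, (forall x, hnorm ip (U x) <= M * hnorm ip x) ->
    forall x, hnorm ip (U x) <= `|M| * hnorm ip x.
  move=> U M h x; apply: (le_trans (h x)); apply: ler_wpM2r; [exact: hn0 | exact: ler_norm].
have nBh : forall y, nB B y ^+ 2 <= `|MA| * hnorm ip y ^+ 2.
  move=> y; rewrite (nB2 Blin Bherm Bpos); apply: (le_trans (Re_le_normc _)).
  apply: (le_trans (CS ipl iph ipp _ _)).
  rewrite expr2 mulrA; apply: ler_wpM2r; first exact: hn0.
  exact: hnormb.
have grow : forall (U U' : V -> V) MU MU',
    (forall x, hnorm ip (U x) <= MU * hnorm ip x) ->
    (forall x, hnorm ip (U' x) <= MU' * hnorm ip x) ->
    forall x, exists c0, forall k, nB B (iter k (fun z => U' (U z)) x) ^+ 2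
        <= c0 * ((`|MU'| * `|MU|) ^+ 2) ^+ k.
  move=> U U' MU MU' hU hU' x; exists (`|MA| * hnorm ip x ^+ 2) => k.
  have hk : hnorm ip (iter k (fun z => U' (U z)) x) <= (`|MU'| * `|MU|) ^+ k * hnorm ip x.
    elim: k => [|k IH]; first by rewrite expr0 mul1r.
    rewrite iterS; apply: (le_trans (hnormb _ _ hU' _)).
    apply: (le_trans (_ : _ <= `|MU'| * (`|MU| * ((`|MU'| * `|MU|) ^+ k * hnorm ip x)))).
      apply: ler_wpM2l => //; apply: (le_trans (hnormb _ _ hU _)); exact: ler_wpM2l.
    by rewrite exprS le_eqVlt; apply/orP; left; apply/eqP; ring.
  apply: (le_trans (nBh _)); rewrite mulrAC -mulrA ler_wpM2l //.
  rewrite -exprM mulnC exprM -exprMn ler_pXn2r // ?nnegrE //.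
  by rewrite mulr_ge0 // exprn_ge0 // mulr_ge0.
set MqT := (`|MT'| * `|MT|) ^+ 2.
set MqS := (`|MS'| * `|MS|) ^+ 2.
have KT := Ubound Blin Bherm Bpos Tl T'l adjT (sqr_ge0 _) (grow _ _ _ _ hMT hMT').
have KS := Ubound Blin Bherm Bpos Sl S'l adjS (sqr_ge0 _) (grow _ _ _ _ hMS hMS').
pose U := [set x | nB B x = 1]%classic.
have nBg := nB_ge0 Blin Bherm Bpos.
have sqb : forall t u : R, 0 <= t -> 0 <= u -> t ^+ 2 <= u -> t <= 1 + u by move=> t u; nra.
have sq0 : forall t : R, t ^+ 2 <= 0 -> t <= 0 by move=> t; nra.
have hTub : forall x, U x -> nB B (T x) <= 1 + Num.sqrt MqT.
  move=> x hx; apply: sqb; [exact: nBg | exact: sqrtr_ge0 |].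
  by have := KT x; rewrite hx expr1n mulr1.
have hSub : forall x, U x -> nB B (S x) <= 1 + Num.sqrt MqS.
  move=> x hx; apply: sqb; [exact: nBg | exact: sqrtr_ge0 |].
  by have := KS x; rewrite hx expr1n mulr1.
pose a := opnormA ip A T.
pose b := opnormA ip A S.
have hT : forall u, nB B (T u) <= a * nB B u.
  move=> u; change (nB B (T u) <= a * nB B u ^+ 1).
  apply: (@hom_bound R V B Blin Bherm Bpos (fun u => nB B (T u)) 1%N a isT).
  - by move=> r v rp; rewrite /= (linZ Tl) (nBZ Blin Bherm Bpos) gtr0_norm // expr1.
  - by move=> v hv; apply: sq0; have := KT v; rewrite hv expr0n mulr0.
  - by move=> v hv; exact: (sup_ub_img hTub hv).
have hS : forall u, nB B (S u) <= b * nB B u.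
  move=> u; change (nB B (S u) <= b * nB B u ^+ 1).
  apply: (@hom_bound R V B Blin Bherm Bpos (fun u => nB B (S u)) 1%N b isT).
  - by move=> r v rp; rewrite /= (linZ Sl) (nBZ Blin Bherm Bpos) gtr0_norm // expr1.
  - by move=> v hv; apply: sq0; have := KS v; rewrite hv expr0n mulr0.
  - by move=> v hv; exact: (sup_ub_img hSub hv).
have a0 : 0 <= a by apply: (sup_ge0_img hTub) => y _; exact: nBg.
have b0 : 0 <= b by apply: (sup_ge0_img hSub) => y _; exact: nBg.
have STlin : islin (fun y => S (T y)) by move=> k u w; rewrite (Tl k u w) (Sl k).
have hWub : forall x, U x -> Normc.normc (B (S (T x)) x) <= a * b.
  move=> x hx; apply: (le_trans (CS Blin Bherm Bpos _ _)); rewrite hx mulr1.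
  apply: (le_trans (hS _)); rewrite mulrC ler_wpM2r //.
  by apply: (le_trans (hT _)); rewrite hx mulr1.
pose W := numradA ip A (S \o T).
have hW : forall u, Normc.normc (B (S (T u)) u) <= W * nB B u ^+ 2.
  move=> u; apply: (@hom_bound R V B Blin Bherm Bpos (fun u => Normc.normc (B (S (T u)) u)) 2%N W isT).
  - move=> r v rp; rewrite /= (BZZ Blin Bherm Bpos STlin) Normc.normcM normc_real.
    by rewrite ger0_norm // exprn_ge0 // ltW.
  - move=> v hv; apply: (le_trans (CS Blin Bherm Bpos _ _)); by rewrite hv mulr0.
  - by move=> v hv; exact: (sup_ub_img hWub hv).
have W0 : 0 <= W by apply: (sup_ge0_img hWub) => y _; exact: normc_ge0'.
have hfin : forall y, U y -> Normc.normc (B (T (S y)) y) <= (W + a * b) / 2.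
  move=> y hy; exact: (final Blin Bherm Bpos Tl T'l Sl S'l adjT adjS hT hS hW hy).
apply: (sup_le_img hfin _ hfin).
by rewrite divr_ge0 // addr_ge0 // mulr_ge0.
Qed.
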